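(* Let $n,m_1,m_2$ be positive integers with $m_2 \geq n \geq \lceil \log m_1 \rceil+\lceil \log m_2 \rceil+1$. Then $R(C_{n},K_{m_1,m_2})\leq 33m_1+49m_2$.
   Context: $C_n$ is the cycle on $n$ vertices and $K_{a,b}$ the complete bipartite graph with parts of sizes $a$ and $b$. $R(G_1,G_2)$ is the smallest $N$ such that every red/blue coloring of the edges of $K_N$ contains a red copy of $G_1$ or a blue copy of $G_2$. $\log$ denotes the logarithm to base $2$. *)

(* Defs.v *)
From mathcomp Require Import all_boot.
Set Implicit Arguments. Unset Strict Implicit. Unset Printing Implicit Defensive.

(* A red/blue colouring of the edges of K_N: vertex set 'I_N, a symmetric
   relation c; the edge {x,y} (x != y) is red iff c x y, blue iff ~~ c x y. *)
Definition symmetric_colouring (N : nat) (c : 'I_N -> 'I_N -> bool) : Prop :=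
  forall x y, c x y = c y x.

Definition red_edge N (c : 'I_N -> 'I_N -> bool) (x y : 'I_N) : bool :=
  (x != y) && c x y.
Definition blue_edge N (c : 'I_N -> 'I_N -> bool) (x y : 'I_N) : bool :=
  (x != y) && ~~ c x y.

Definition has_red_cycle N (c : 'I_N -> 'I_N -> bool) (n : nat) : Prop :=
  exists v : 'I_n -> 'I_N, injective v /\
    forall i : 'I_n, red_edge c (v i) (v (ordS i)).

Definition has_blue_Kab N (c : 'I_N -> 'I_N -> bool) (a b : nat) : Prop :=
  exists A B : {set 'I_N}, [/\ #|A| = a, #|B| = b, [disjoint A & B] &
    forall x y, x \in A -> y \in B -> blue_edge c x y].

Definition ramsey_Cn_Kab (n a b N : nat) : Prop :=
  forall c : 'I_N -> 'I_N -> bool, symmetric_colouring c ->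
    has_red_cycle c n \/ has_blue_Kab c a b.

Definition ramsey_le (n a b M : nat) : Prop :=
  exists2 N, N <= M & ramsey_Cn_Kab n a b N.

Definition clog2 (m : nat) : nat := up_log 2 m.

(* Main.v *)
Require Import Defs.
From mathcomp Require Import all_boot.
From mathcomp Require Import zify.
From Stdlib Require Import Classical.
Set Implicit Arguments. Unset Strict Implicit. Unset Printing Implicit Defensive.

Lemma sub_card (T : finType) (A : {set T}) k :
  k <= #|A| -> exists2 B : {set T}, B \subset A & #|B| = k.
Proof.
move/card_geqP=> [s [us ss sA]].
exists [set x in s]; first by apply/subsetP=> x; rewrite inE; exact: sA.
by rewrite cardsE (card_uniqP us).
Qed.

Definition Pk (T : finType) (e : rel T) (k k' : nat) :=
  forall X Y : {set T}, [disjoint X & Y] -> k <= #|X| -> k' <= #|Y| ->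
    exists x y, [/\ x \in X, y \in Y & e x y].

Definition Nb (T : finType) (e : rel T) (E L : {set T}) :=
  [set v in E | (v \notin L) && [exists x in L, e x v]].

Lemma Pk_sym (T : finType) (e : rel T) k k' :
  (forall x y, e x y = e y x) -> Pk e k k' -> Pk e k' k.
Proof.
move=> esym P X Y dXY hX hY.
have [|y [x [yY xX exy]]] := P Y X _ hY hX; first by rewrite disjoint_sym.
by exists x, y; split=> //; rewrite esym.
Qed.

Lemma Nb_big (T : finType) (e : rel T) k k' (R S : {set T}) :
  Pk e k k' -> k <= #|S| -> #|R| <= #|S| + #|Nb e R S| + k'.-1.
Proof.
move=> P hS.
set Y := R :\: S :\: Nb e R S.
have hY : #|Y| < k'.
  rewrite ltnNge; apply/negP=> hY.
  have [|x [y [xS yY exy]]] := P S Y _ hS hY.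
    rewrite -setI_eq0; apply/eqP/setP=> z; rewrite !inE.
    by case: (z \in S); rewrite ?andbF.
  move: yY; rewrite !inE => /andP[yN /andP[yS yR]].
  move/negP: yN; apply; rewrite yR yS /=.
  by apply/existsP; exists x; rewrite xS.
have sub : R \subset S :|: Nb e R S :|: Y.
  apply/subsetP=> z zR; rewrite !in_setU /Y !in_setD zR.
  by case: (z \in S); case: (z \in Nb e R S).
have h0 := subset_leq_card sub.
have h1 : #|S :|: Nb e R S| <= #|S| + #|Nb e R S| := leq_card_setU _ _.
have h2 : #|S :|: Nb e R S :|: Y| <= #|S :|: Nb e R S| + #|Y| := leq_card_setU _ _.
lia.
Qed.

Lemma Nb_U (T : finType) (e : rel T) (R S X : {set T}) :
  Nb e R (S :|: X) \subset Nb e R S :|: Nb e (R :\: S) X.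
Proof.
apply/subsetP=> v; rewrite !inE negb_or => /and3P[vR /andP[vS vX] /existsP[x]].
rewrite !inE => /andP[/orP[xS|xX] exv].
  by rewrite vR vS /=; apply/orP; left; apply/existsP; exists x; rewrite xS.
by rewrite vR vS vX /= orbC; apply/orP; left; apply/existsP; exists x; rewrite xX.
Qed.

Lemma expander (T : finType) (e : rel T) k k' (R : {set T}) :
  Pk e k k' -> 0 < k -> 10 * k + k' <= #|R| ->
  exists E : {set T}, [/\ E \subset R, #|R| < #|E| + k &
    forall X : {set T}, X \subset E -> 0 < #|X| -> #|X| < k -> 4 * #|X| <= #|Nb e E X|].
Proof.
move=> P k0 hR.
pose F (S : {set T}) := [&& S \subset R, #|S| < 2 * k & #|Nb e R S| <= 4 * #|S|].
pose Pm m := [exists S : {set T}, F S && (#|S| == m)].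
have exP : exists m, Pm m.
  exists 0; apply/existsP; exists set0; rewrite /F sub0set cards0 muln0.
  have -> : Nb e R set0 = set0.
    by apply/setP=> v; rewrite !inE; apply/negbTE/andP=> [[_ /andP[_ /existsP[x]]]]; rewrite inE.
  by rewrite cards0 /=; lia.
have ubP : forall m, Pm m -> m <= #|T|.
  by move=> m /existsP[S /andP[_ /eqP <-]]; exact: max_card.
case: (ex_maxnP exP ubP) => m /existsP[S /andP[FS /eqP Sm]] maxS.
move: FS; rewrite /F => /and3P[SR Sk NS].
have Ska : #|S| < k.
  rewrite ltnNge; apply/negP=> kS.
  have := Nb_big R P kS; lia.
exists (R :\: S); split.
- exact: subsetDl.
- by rewrite cardsDS //; lia.
move=> X XE X0 Xk; rewrite leqNgt; apply/negP=> NX.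
have dSX : [disjoint S & X].
  rewrite -setI_eq0; apply/eqP/setP=> z; rewrite !inE.
  apply/negbTE/andP=> [[zS zX]]; move/subsetP: XE => /(_ z zX); rewrite inE zS.
  done.
have cU : #|S :|: X| = #|S| + #|X| by rewrite cardsU; move: dSX; rewrite -setI_eq0 => /eqP ->; rewrite cards0 subn0.
have : Pm #|S :|: X|.
  apply/existsP; exists (S :|: X); rewrite eqxx andbT /F.
  rewrite subUset SR (subset_trans XE (subsetDl _ _)) /= cU.
  have h1 := subset_leq_card (Nb_U e R S X).
  have h2 : #|Nb e R S :|: Nb e (R :\: S) X| <= #|Nb e R S| + #|Nb e (R :\: S) X| := leq_card_setU _ _.
  apply/andP; split; lia.
move/maxS; lia.
Qed.

Lemma few_bad (T : finType) (e : rel T) k k' (E X : {set T}) :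
  Pk e k k' -> k + k' <= #|E| -> [disjoint X & E] ->
  (forall x, x \in X -> #|[set y in E | e x y]| <= 1) -> #|X| < k.
Proof.
move=> P hE dXE hX; rewrite ltnNge; apply/negP=> kX.
have [X' X'X X'k] := sub_card kX.
pose g x := odflt x [pick y in [set y in E | e x y]].
pose Nx := [set y in E | [exists x in X', e x y]].
have NxS : Nx \subset g @: X'.
  apply/subsetP=> y; rewrite inE => /andP[yE /existsP[x /andP[xX' exy]]].
  apply/imsetP; exists x => //.
  have xX : x \in X by move/subsetP: X'X; apply.
  rewrite /g; case: pickP => [z zN|].
    have yN : y \in [set y in E | e x y] by rewrite inE yE exy.
    by move/card_le1_eqP: (hX x xX) => /(_ y z yN zN) ->.
  by move/(_ y); rewrite inE yE exy.
have cNx : #|Nx| <= k by rewrite -X'k; apply: leq_trans (subset_leq_card NxS) (leq_imset_card _ _).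
pose Y := E :\: Nx.
have cY : k' <= #|Y| by rewrite cardsD; have := subset_leq_card (subsetIr E Nx); lia.
have dX'Y : [disjoint X' & Y].
  exact: (disjointW X'X (subsetDl E Nx) dXE).
have [x [y [xX' yY exy]]] := P X' Y dX'Y (eq_leq (esym X'k)) cY.
move: yY; rewrite !inE => /andP[yN yE].
move/negP: yN; apply; rewrite yE /=.
by apply/existsP; exists x; rewrite xX'.
Qed.

Definition dfs_inv (T : finType) (e : rel T) k (W S : {set T}) (Q : seq T) (Tt : {set T}) :=
  [/\ Tt \subset W, {subset Q <= W}, uniq Q, sorted e Q & [disjoint S & Tt]] /\
  [/\ (forall x, x \in Q -> (x \notin Tt) && (x \notin S)),
      W \subset S :|: Tt :|: [set x in Q],
      (forall x y, x \in S -> y \in Tt -> ~~ e x y) & #|S| < k].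

Lemma dfs_size (T : finType) (e : rel T) k (W S : {set T}) (Q : seq T) (Tt : {set T}) :
  dfs_inv e k W S Q Tt -> #|W| <= #|S| + #|Tt| + size Q.
Proof.
move=> [_ [_ cov _ _]].
have h0 := subset_leq_card cov.
have h1 : #|S :|: Tt :|: [set x in Q]| <= #|S :|: Tt| + #|[set x in Q]| := leq_card_setU _ _.
have h2 : #|S :|: Tt| <= #|S| + #|Tt| := leq_card_setU _ _.
have h3 : #|[set x in Q]| <= size Q by rewrite cardsE; exact: card_size.
lia.
Qed.

Lemma dfs (T : finType) (e : rel T) k k' (W : {set T}) m :
  (forall x y, e x y = e y x) -> Pk e k k' -> 0 < k -> k + k' + m <= #|W| + 1 ->
  exists p : seq T, [/\ m <= size p, uniq p, sorted e p & {subset p <= W}].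
Proof.
move=> esym P k0 hW.
suff H : forall M (S : {set T}) (Q : seq T) (Tt : {set T}), 2 * #|Tt| + size Q <= M -> dfs_inv e k W S Q Tt ->
  exists p : seq T, [/\ m <= size p, uniq p, sorted e p & {subset p <= W}].
  apply: (H (2 * #|W|) set0 [::] W); first by rewrite addn0.
  split; split=> //; first by rewrite -setI_eq0 set0I.
  - by apply/subsetP=> x xW; rewrite !inE xW orbT.
  - by move=> x y; rewrite inE.
  - by rewrite cards0.
elim=> [|M IH] S Q Tt hM inv.
  have hs := dfs_size inv.
  have [[_ QW uQ sQ _] [_ _ _ Sk]] := inv.
  case: (leqP m (size Q)) => [mQ | small]; first by exists Q.
  have : #|Tt| = 0 /\ size Q = 0 by lia.
  move=> [hT hQ]; lia.
have hs := dfs_size inv.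
have [[TW QW uQ sQ dST] [QTS cov noE Sk]] := inv.
case: (leqP m (size Q)) => [mQ | small]; first by exists Q.
case: Q QW uQ sQ QTS cov hM hs small inv => [|q Q0] QW uQ sQ QTS cov hM hs small inv.
  case: (set_0Vmem Tt) => [T0 | [t tT]].
    rewrite T0 cards0 /= in hs; lia.
  apply: (IH S [:: t] (Tt :\ t)).
    move: hM; rewrite (cardsD1 t Tt) tT /= add1n; lia.
  split; split=> //.
  - exact: subset_trans (subsetDl _ _) TW.
  - by move=> x; rewrite inE => /eqP ->; move/subsetP: TW; apply.
  - by apply: disjointWr dST; exact: subsetDl.
  - move=> x; rewrite inE => /eqP ->; rewrite !inE eqxx /=.
    by apply/negP=> tS; move: (disjointFr dST tS); rewrite tT.
  - apply/subsetP=> x xW; move/subsetP: cov => /(_ x xW); rewrite !inE.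
    by case: (x == t); rewrite ?orbT ?andbT ?andbF //= orbF.
  - by move=> x y xS; rewrite inE => /andP[_ yT]; apply: noE.
case: (boolP [exists t in Tt, e q t]) => [/existsP [t /andP[tT eqt]] | noedge].
  apply: (IH S [:: t, q & Q0] (Tt :\ t)).
    move: hM; rewrite (cardsD1 t Tt) tT /= add1n; lia.
  split; split=> //.
  - exact: subset_trans (subsetDl _ _) TW.
  - move=> x; rewrite inE => /orP[/eqP ->|]; last exact: QW.
    by move/subsetP: TW; apply.
  - rewrite cons_uniq uQ andbT; apply/negP=> tQ.
    by move: (QTS t tQ); rewrite tT.
  - by rewrite /= esym eqt.
  - by apply: disjointWr dST; exact: subsetDl.
  - move=> x; rewrite inE => /orP[/eqP ->|xQ].
      rewrite !inE eqxx /=.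
      by apply/negP=> tS; move: (disjointFr dST tS); rewrite tT.
    by move: (QTS x xQ); rewrite !inE => /andP[/negbTE -> ->]; rewrite andbF.
  - apply/subsetP=> x xW; move/subsetP: cov => /(_ x xW); rewrite !inE.
    by case: (x == t); rewrite ?orbT ?andbT ?andbF //= orbF.
  - by move=> x y xS; rewrite inE => /andP[_ yT]; apply: noE.
have qTS := QTS q (mem_head _ _).
move: qTS => /andP[qT qS].
have qnoE : forall y, y \in Tt -> ~~ e q y.
  move=> y yT; apply/negP=> eqy; move/negP: noedge; apply.
  by apply/existsP; exists y; rewrite yT.
have Sq : #|q |: S| = #|S|.+1 by rewrite cardsU1 qS.
case: (leqP k (#|S|.+1)) => [hk | hk].
  have : #|Tt| < k'.
    rewrite ltnNge; apply/negP=> hT.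
    have dis : [disjoint q |: S & Tt].
      rewrite -setI_eq0 setIUl (disjoint_setI0 dST) setU0; apply/eqP/setP=> z.
      by rewrite !inE; apply/negbTE/andP=> [[/eqP -> zT]]; move: qT; rewrite zT.
    have hk' : k <= #|q |: S| by rewrite Sq.
    have [x [y [xS yT exy]]] := P (q |: S) Tt dis hk' hT.
    case/setU1P: xS => [xq|xS].
      by move: (qnoE y yT); rewrite -xq exy.
    by move: (noE x y xS yT); rewrite exy.
  move=> hT; lia.
apply: (IH (q |: S) Q0 Tt).
  by move: hM => /=; lia.
move: uQ sQ => /= /andP[qQ0 uQ0] sQ.
split; split=> //.
- by move=> x xQ; apply: QW; rewrite inE xQ orbT.
- exact: path_sorted sQ.
- rewrite -setI_eq0 setIUl (disjoint_setI0 dST) setU0; apply/eqP/setP=> z.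
  by rewrite !inE; apply/negbTE/andP=> [[/eqP -> zT]]; move: qT; rewrite zT.
- move=> x xQ0; have := QTS x; rewrite inE xQ0 orbT => /(_ isT) /andP[xT xS].
  rewrite xT /=; apply/setU1P=> [[xq|]]; last by apply/negP.
  by move: qQ0; rewrite -xq xQ0.
- apply/subsetP=> x xW; move/subsetP: cov => /(_ x xW); rewrite !inE.
  by case: (x == q); rewrite ?orbT //= ?orbF.
- move=> x y /setU1P[-> | xS] yT; first exact: qnoE.
  exact: noE.
- by rewrite Sq.
Qed.

Lemma funnel (T : finType) (e : rel T) k (E : {set T}) r :
  0 < k -> r \notin E -> (1 < k -> 2 <= #|[set y in E | e r y]|) ->
  (forall X : {set T}, X \subset E -> 0 < #|X| -> #|X| < k -> 4 * #|X| <= #|Nb e E X|) ->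
  exists L : {set T}, [/\ k <= #|L|, (1 < k -> L \subset E), L \subset E :|: [set r] &
    forall v, v \in L -> exists s : seq T,
      [/\ size s = up_log 2 k, path e r s, last r s = v, uniq s & {subset s <= E}]].
Proof.
move=> k0 rE deg expE.
case: (leqP k 1) => [k1 | k1].
  have -> : k = 1 by lia.
  exists [set r]; split; first by rewrite cards1.
  - by [].
  - exact: subsetUr.
  move=> v; rewrite inE => /eqP ->; exists [::]; split=> //.
set s0 := up_log 2 k.
have s0pos : 0 < s0 by rewrite /s0 up_log_gt0.
have claim : forall j, 0 < j -> j <= s0 -> exists L U : {set T},
  [/\ U \subset E, L \subset U, #|L| = 2 ^ j, #|U| + 2 <= 2 ^ j.+1 &
    forall v, v \in L -> exists s : seq T,
      [/\ size s = j, path e r s, last r s = v, uniq s & {subset s <= U}]].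
  elim=> [//|j IH] _ js0.
  case: (posnP j) => [j0 | jpos].
    subst j.
    have [L LN L2] := sub_card (deg k1).
    exists L, L; split=> //.
    - by apply: subset_trans LN _; apply/subsetP=> y; rewrite inE => /andP[].
    - by rewrite L2.
    move=> v vL; exists [:: v]; split=> //=.
    - move/subsetP: LN => /(_ v vL); rewrite inE => /andP[_ ->]; done.
    - by move=> x; rewrite inE => /eqP ->.
  have [L [U [UE LU cL cU paths]]] := IH jpos (ltnW js0).
  have jk : 2 ^ j < k.
    apply: leq_ltn_trans (up_log_gtn (isT : 1 < 2) k1).
    by rewrite leq_exp2l //; lia.
  have LE : L \subset E := subset_trans LU UE.
  have L0 : 0 < #|L| by rewrite cL expn_gt0.
  have Lk : #|L| < k by rewrite cL.
  have hN := expE L LE L0 Lk.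
  set C := Nb e E L :\: U.
  have cC : 2 ^ j.+1 <= #|C|.
    rewrite /C cardsD.
    have sub : Nb e E L :&: U \subset U :\: L.
      apply/subsetP=> v; rewrite !inE => /andP[/and3P[_ vL _] vU]; by rewrite vL vU.
    have := subset_leq_card sub; rewrite cardsDS // => h.
    rewrite expnS in cU *; lia.
  have [L' L'C cL'] := sub_card cC.
  have L'N : L' \subset Nb e E L by apply: subset_trans L'C (subsetDl _ _).
  have dL'U : forall v, v \in L' -> v \notin U.
    by move=> v /(subsetP L'C); rewrite inE => /andP[].
  exists L', (U :|: L'); split.
  - by rewrite subUset UE; apply: subset_trans L'N _; apply/subsetP=> v; rewrite inE => /andP[].
  - exact: subsetUr.
  - exact: cL'.
  - rewrite cardsU.
    have -> : U :&: L' = set0.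
      apply/setP=> v; rewrite !inE; apply/negbTE/andP=> [[vU vL']].
      by move: (dL'U v vL'); rewrite vU.
    rewrite cards0 subn0 cL' !expnS in cU *; lia.
  move=> v vL'.
  have := subsetP L'N v vL'; rewrite inE => /and3P[_ _ /existsP[u /andP[uL euv]]].
  have [s [ss ps ls us sU]] := paths u uL.
  exists (rcons s v); split.
  - by rewrite size_rcons ss.
  - by rewrite rcons_path ps ls euv.
  - by rewrite last_rcons.
  - rewrite rcons_uniq us andbT; apply/negP=> vs.
    by move: (dL'U v vL'); rewrite (sU v vs).
  - move=> x; rewrite mem_rcons inE => /orP[/eqP ->|xs].
      by rewrite inE vL' orbT.
    by rewrite inE (sU x xs).
have [L [U [UE LU cL _ paths]]] := claim s0 s0pos (leqnn _).
exists L; split.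
- by rewrite cL; exact: up_logP.
- by move=> _; exact: subset_trans LU UE.
- exact: subset_trans (subset_trans LU UE) (subsetUl _ _).
move=> v vL; have [s [ss ps ls us sU]] := paths v vL.
exists s; split=> //.
by move=> x xs; apply: (subsetP UE); apply: sU.
Qed.

Lemma cycle_fun (T : finType) (e : rel T) n (c : seq T) :
  size c = n -> uniq c -> cycle e c -> 0 < n ->
  exists v : 'I_n -> T, injective v /\ forall i : 'I_n, e (v i) (v (ordS i)).
Proof.
case: c => [|x p] /=; first by move=> <-.
move=> sc uc cyc _.
exists (fun i : 'I_n => nth x (x :: p) i); split.
  move=> i j /eqP.
  have hi : i < size (x :: p) by rewrite /= sc.
  have hj : j < size (x :: p) by rewrite /= sc.
  rewrite nth_uniq // => /eqP h.
  exact: val_inj.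
move=> i.
have /pathP := cyc => /(_ x i).
have hi : i < (size p).+1 by rewrite sc.
rewrite size_rcons => /(_ hi).
rewrite -rcons_cons !nth_rcons /= hi.
case: (ltnP i (size p)) => hip.
  rewrite modn_small; last by lia.
  by [].
have ei : (i : nat) = size p by have := ltn_ord i; lia.
rewrite ei eqxx.
have -> : (size p).+1 %% n = 0 by rewrite -sc modnn.
by [].
Qed.

Lemma nohas (T : finType) (s1 s2 : seq T) (A B : {set T}) :
  {subset s1 <= A} -> {subset s2 <= B} -> [disjoint A & B] -> ~~ has (mem s1) s2.
Proof.
move=> s1A s2B dAB; apply/hasP=> [[x xs2 xs1]].
by move: (disjointFr dAB (s1A x xs1)); rewrite (s2B x xs2).
Qed.

Lemma ar1 (N m1 m2 n s0 t0 w ba bb : nat) : N = 33*m1+49*m2 ->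
  N - (11 * m1 + 11 * m2) <= w + ba + bb -> ba < m1 -> bb < m1 -> n <= m2 ->
  m1 + m2 + (n - s0 - t0) <= w + 1.
Proof. lia. Qed.

Lemma ar2 (n s0 t0 : nat) : s0 + t0 + 1 <= n -> 0 < n - s0 - t0.
Proof. lia. Qed.

Lemma ar3 (n s0 t0 : nat) : s0 + t0 + 1 <= n -> ((n - s0 - t0).-1 + (t0 + s0)).+1 = n.
Proof. lia. Qed.

Lemma ar4 (m k : nat) : m <= k.+1 -> m.-1 <= k.
Proof. lia. Qed.

Lemma take_cons_pos (T : Type) (k : nat) (x : T) s : 0 < k -> take k (x :: s) = x :: take k.-1 s.
Proof. by case: k. Qed.

Theorem lemma2p7 (n m1 m2 : nat) :
  3 <= n -> 0 < m1 -> 0 < m2 ->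
  n <= m2 -> clog2 m1 + clog2 m2 + 1 <= n ->
  ramsey_le n m1 m2 (33 * m1 + 49 * m2).
Proof.
move=> n3 a0 b0 nb hlog.
exists (33 * m1 + 49 * m2) => //.
move=> c csym.
pose e := red_edge c.
have esym : forall x y, e x y = e y x.
  by move=> x y; rewrite /e /red_edge eq_sym csym.
case: (classic (has_blue_Kab c m1 m2)) => [hb | nhb]; [by right | left].
have P : Pk e m1 m2.
  move=> X Y dXY hX hY.
  case: (boolP [exists x in X, exists y in Y, e x y]) => [/existsP[x /andP[xX /existsP[y /andP[yY exy]]]] | ne].
    by exists x, y.
  exfalso; apply: nhb.
  have [X' X'X cX'] := sub_card hX.
  have [Y' Y'Y cY'] := sub_card hY.
  exists X', Y'; split=> //.
    exact: disjointW X'X Y'Y dXY.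
  move=> x y xX' yY'.
  have xX := subsetP X'X x xX'; have yY := subsetP Y'Y y yY'.
  have xy : x != y by apply/eqP=> exy; move: (disjointFr dXY xX); rewrite exy yY.
  rewrite /blue_edge xy /=; apply/negP=> cxy; move/negP: ne; apply.
  apply/existsP; exists x; rewrite xX /=; apply/existsP; exists y.
  by rewrite yY /e /red_edge xy cxy.
have P' : Pk e m2 m1 := Pk_sym esym P.
set N := 33 * m1 + 49 * m2 in c csym e esym P P' nhb *.
have cT : #|[set: 'I_N]| = N by rewrite cardsT card_ord.
have [RA _ cRA] := @sub_card _ [set: 'I_N] (10 * m1 + m2) ltac:(rewrite cT /N; lia).
have cCA : #|~: RA| = N - (10 * m1 + m2) by rewrite cardsCs setCK card_ord cRA.
have [RB RBs cRB] := @sub_card _ (~: RA) (10 * m2 + m1) ltac:(rewrite cCA /N; lia).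
set W0 := ~: (RA :|: RB).
have dAB : [disjoint RA & RB].
  by rewrite disjoint_sym disjoints_subset.
have cW0 : #|W0| = N - (11 * m1 + 11 * m2).
  rewrite /W0 cardsCs setCK card_ord cardsU (disjoint_setI0 dAB) cards0 cRA cRB; lia.
have [EA [EAR cEA expA]] := @expander _ e m1 m2 RA P a0 ltac:(rewrite cRA; lia).
have [EB [EBR cEB expB]] := @expander _ e m2 m1 RB P' b0 ltac:(rewrite cRB; lia).
have W0A : [disjoint W0 & EA].
  apply: disjointWr EAR _; rewrite disjoints_subset /W0 setCS; exact: subsetUl.
have W0B : [disjoint W0 & EB].
  apply: disjointWr EBR _; rewrite disjoints_subset /W0 setCS; exact: subsetUr.
have dEAB : [disjoint EA & EB] := disjointW EAR EBR dAB.
set BadA := [set x in W0 | #|[set y in EA | e x y]| <= 1].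
set BadB := [set x in W0 | #|[set y in EB | e x y]| <= 1].
have cBA : #|BadA| < m1.
  apply: (@few_bad _ e m1 m2 EA BadA P); first by move: cEA; rewrite cRA; lia.
    by apply: disjointWl W0A; apply/subsetP=> x; rewrite inE => /andP[].
  by move=> x; rewrite inE => /andP[].
have cBB : #|BadB| < m1.
  apply: (@few_bad _ e m1 m2 EB BadB P); first by move: cEB; rewrite cRB; lia.
    by apply: disjointWl W0B; apply/subsetP=> x; rewrite inE => /andP[].
  by move=> x; rewrite inE => /andP[].
set W := W0 :\: BadA :\: BadB.
have cW : #|W0| <= #|W| + #|BadA| + #|BadB|.
  have sub : W0 \subset W :|: BadA :|: BadB.
    apply/subsetP=> x xW0; rewrite !in_setU /W !in_setD xW0.
    by case: (x \in BadA); case: (x \in BadB).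
  have h1 := subset_leq_card sub.
  have h2 : #|W :|: BadA :|: BadB| <= #|W :|: BadA| + #|BadB| := leq_card_setU _ _.
  have h3 : #|W :|: BadA| <= #|W| + #|BadA| := leq_card_setU _ _.
  lia.
have WW0 : W \subset W0 by rewrite /W; apply: subset_trans (subsetDl _ _) (subsetDl _ _).
have WA : [disjoint W & EA] := disjointWl WW0 W0A.
have WB : [disjoint W & EB] := disjointWl WW0 W0B.
set s0 := up_log 2 m1.
set t0 := up_log 2 m2.
have hst : s0 + t0 + 1 <= n by exact: hlog.
set m := n - s0 - t0.
have hN : N = 33 * m1 + 49 * m2 by [].
have hm : m = n - s0 - t0 by [].
have hdfs : m1 + m2 + m <= #|W| + 1.
  move: cW; rewrite cW0 => cW.
  have := ar1 s0 t0 hN cW cBA cBB nb; rewrite -hm; apply.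
have [p [mp up sp pW]] := @dfs _ e m1 m2 W m esym P a0 hdfs.
have mpos : 0 < m by rewrite hm; exact: ar2 hst.
case: p mp up sp pW => [|q0 p'] mp up sp pW.
  by move: mpos; rewrite ltnNge mp.
set Q' := take m.-1 p'.
have eQ : take m (q0 :: p') = q0 :: Q' by rewrite /Q'; exact: take_cons_pos.
have QW : {subset q0 :: Q' <= W}.
  by rewrite -eQ => x /mem_take; exact: pW.
have uQ : uniq (q0 :: Q') by rewrite -eQ take_uniq.
have pQ : path e q0 Q' by exact: take_path.
have sQ' : size Q' = m.-1 by rewrite /Q' size_takel //; exact: ar4 mp.
set rB := last q0 Q'.
have rBW : rB \in W by apply: QW; exact: mem_last.
have q0W : q0 \in W by apply: QW; exact: mem_head.
have notbad : forall x, x \in W -> (x \in W0) && (x \notin BadA) && (x \notin BadB).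
  by move=> x; rewrite /W !in_setD => /andP[-> /andP[-> ->]].
have degA : 1 < m1 -> 2 <= #|[set y in EA | e q0 y]|.
  move=> _; move: (notbad q0 q0W) => /andP[/andP[qW0 qA] _].
  by move: qA; rewrite inE qW0 /= -ltnNge.
have [LA [cLA _ LAE pathsA]] := @funnel _ e m1 EA q0 a0 (negbT (disjointFr WA q0W)) degA expA.
have m2gt1 : 1 < m2 by apply: leq_trans nb; apply: leq_trans n3.
have degB : 1 < m2 -> 2 <= #|[set y in EB | e rB y]|.
  move=> _; move: (notbad rB rBW) => /andP[/andP[rW0 _] rBB].
  by move: rBB; rewrite inE rW0 /= -ltnNge.
have [LB [cLB LBE _ pathsB]] := @funnel _ e m2 EB rB b0 (negbT (disjointFr WB rBW)) degB expB.
have dL : [disjoint LA & LB].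
  apply: disjointW LAE (LBE m2gt1) _.
  rewrite -setI_eq0 setIUl (disjoint_setI0 dEAB) set0U; apply/eqP/setP=> z.
  rewrite !inE; apply/negbTE/andP=> [[/eqP -> qEB]].
  by move: (disjointFr WB q0W); rewrite qEB.
have [v [w [vLA wLB evw]]] := P LA LB dL cLA cLB.
have [sA [ssA psA lsA usA sAE]] := pathsA v vLA.
have [sB [ssB psB lsB usB sBE]] := pathsB w wLB.
pose cyc := (q0 :: Q') ++ sB ++ rev sA.
have scyc : size cyc = n.
  rewrite /cyc !size_cat size_rev /= sQ' ssA ssB hm; exact: ar3 hst.
have ucyc : uniq cyc.
  rewrite /cyc cat_uniq uQ /= cat_uniq usB rev_uniq usA /= has_cat negb_or.
  have h1 := nohas QW sBE WB.
  have h2 : ~~ has (mem (q0 :: Q')) (rev sA) by rewrite has_rev; exact: nohas QW sAE WA.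
  have h3 : ~~ has (mem sB) (rev sA).
    by rewrite has_rev; apply: nohas sBE sAE _; rewrite disjoint_sym.
  by rewrite h1 h2 h3.
have ccyc : cycle e cyc.
  rewrite /cyc cat_cons /= rcons_cat rcons_cat -rev_cons cat_path pQ /=.
  rewrite cat_path psB /= lsB.
  have H := rev_path e q0 (rcons sA w).
  rewrite last_rcons belast_rcons in H; rewrite H.
  rewrite (@eq_path _ _ e); last by move=> x y; rewrite esym.
  by rewrite rcons_path psA lsA evw.
have n0 : 0 < n by apply: leq_trans n3.
have [f [finj fe]] := cycle_fun scyc ucyc ccyc n0.
by exists f.
Qed.
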